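(* Let $\lambda>0$, $\gamma>0$, let $\beta_1=\beta_1(\gamma)$ be the unique positive solution of $\frac{\sqrt\pi}{2}\gamma x(1+x)^{1/2}(3+x)=1$, and let $0\le\beta<\beta_1$. Let $\varphi$ be the unique solution, within the set $K$ of bounded analytic functions $h:[0,\lambda]\to\mathbb{R}$ with $0\le h\le 1$, of \begin{align*} &[(1+\beta y(\eta))y'(\eta)]'+2\eta y'(\eta)=0, \quad 0<\eta<\lambda,\\ &y'(0)+\beta y(0)y'(0)-\gamma y(0)=0,\\ &y(\lambda)=1. \end{align*} Then for all $0<\eta<\lambda$: $0\le\varphi(\eta)\le 1$, $\varphi'(\eta)>0$ and $\varphi''(\eta)<0$. *)

(* Defs.v *)
From Stdlib Require Import Reals Lra.
From Coquelicot Require Import Coquelicot.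
Open Scope R_scope.

Definition analytic_at (h : R -> R) (x0 : R) : Prop :=
  exists (a : nat -> R) (r : R), 0 < r /\
    forall x, Rabs (x - x0) < r -> is_pseries a (x - x0) (h x).

Definition in_K (lam : R) (h : R -> R) : Prop :=
  (forall x, 0 <= x <= lam -> analytic_at h x) /\
  (forall x, 0 <= x <= lam -> 0 <= h x <= 1).

Definition solves_P (lam beta gamma : R) (y : R -> R) : Prop :=
  (forall eta, 0 < eta < lam ->
     Derive (fun t => (1 + beta * y t) * Derive y t) eta
       + 2 * eta * Derive y eta = 0) /\
  Derive y 0 + beta * y 0 * Derive y 0 - gamma * y 0 = 0 /\
  y lam = 1.

Definition beta1_eq (gamma x : R) : Prop :=
  sqrt PI / 2 * gamma * x * sqrt (1 + x) * (3 + x) = 1.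

(* Main.v *)
Require Import Defs.
From Stdlib Require Import Reals Lra Psatz.
From Coquelicot Require Import Coquelicot.
Open Scope R_scope.
Lemma rad_ge a z : ex_pseries a z -> Rbar_le (Rabs z) (CV_radius a).
Proof.
  intros H.
  apply (proj1 (CV_radius_bounded a)).
  apply ex_series_lim_0 in H.
  apply is_lim_seq_abs in H. simpl in H. rewrite Rabs_R0 in H.
  apply is_lim_seq_Reals in H.
  destruct (cauchy_bound _ (CV_Cauchy _ (exist _ 0 H))) as [M HM].
  exists M. intros n. apply HM. exists n.
  replace (scal (pow_n z n) (a n)) with (z ^ n * a n) by (rewrite <- pow_n_pow; reflexivity). rewrite !Rabs_mult, RPow_abs, Rabs_Rabsolu. ring.
Qed.
Lemma ps_loc (h : R -> R) a x r : 0 < r ->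
  (forall y, Rabs (y - x) < r -> is_pseries a (y - x) (h y)) ->
  forall y, Rabs (y - x) < r ->
    is_derive h y (PSeries (PS_derive a) (y - x)) /\
    is_pseries (PS_derive a) (y - x) (Derive h y).
Proof.
  intros Hr H.
  assert (rad : forall y, Rabs (y - x) < r -> Rbar_lt (Rabs (y - x)) (CV_radius a)).
  { intros y Hy. set (w := (Rabs (y - x) + r) / 2).
    assert (Hw : ex_pseries a w).
    { exists (h (x + w)). pose proof (H (x + w)) as K.
      replace (x + w - x) with w in K by ring. apply K. unfold w. rewrite Rabs_pos_eq.
      lra. pose proof (Rabs_pos (y - x)); lra. }
    apply rad_ge in Hw. rewrite (Rabs_pos_eq w) in Hw.
    2:{ unfold w; pose proof (Rabs_pos (y - x)); lra. }
    apply Rbar_lt_le_trans with w; auto. simpl. unfold w; lra. }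
  intros y Hy.
  assert (D : is_derive h y (PSeries (PS_derive a) (y - x))).
  { apply is_derive_ext_loc with (fun z => PSeries a (z - x)).
    - assert (Hd : 0 < r - Rabs (y - x)) by lra.
      exists (mkposreal _ Hd). intros z Hz. simpl in Hz.
      unfold ball in Hz; simpl in Hz; unfold AbsRing_ball, abs, minus, plus, opp in Hz; simpl in Hz.
      apply is_pseries_unique, H.
      replace (z - x) with ((z + - y) + (y - x)) by ring.
      pose proof (Rabs_triang (z + - y) (y - x)). lra.
    - pose proof (is_derive_comp (PSeries a) (fun z => z - x) y _ 1 (is_derive_PSeries a (y - x) (rad y Hy))) as K.
      assert (K2 : is_derive (fun z : R => z - x) y 1) by (auto_derive; auto; ring).
      specialize (K K2). replace (PSeries (PS_derive a) (y - x)) with (scal 1 (PSeries (PS_derive a) (y - x))). exact K.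
      unfold scal; simpl; unfold mult; simpl; ring. }
  split; auto.
  rewrite (is_derive_unique _ _ _ D). apply PSeries_correct.
  apply ex_pseries_derive, rad, Hy.
Qed.

Lemma smooth (h : R -> R) x : analytic_at h x -> ex_derive h x /\ ex_derive (Derive h) x.
Proof.
  intros [a [r [Hr H]]].
  pose proof (ps_loc h a x r Hr H) as P.
  assert (H0 : Rabs (x - x) < r) by (replace (x - x) with 0 by ring; rewrite Rabs_R0; lra).
  split.
  - eexists. apply (proj1 (P x H0)).
  - assert (H2 : forall y, Rabs (y - x) < r -> is_pseries (PS_derive a) (y - x) (Derive h y))
      by (intros y Hy; apply (proj2 (P y Hy))).
    eexists. apply (proj1 (ps_loc (Derive h) (PS_derive a) x r Hr H2 x H0)).
Qed.

Theorem mainTheorem8 (lam gamma beta beta1 : R) (phi : R -> R)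
  (Hlam : 0 < lam) (Hgamma : 0 < gamma)
  (Hb1pos : 0 < beta1) (Hb1 : beta1_eq gamma beta1)
  (Hb1uniq : forall x, 0 < x -> beta1_eq gamma x -> x = beta1)
  (Hbeta : 0 <= beta < beta1)
  (HK : in_K lam phi) (Hsol : solves_P lam beta gamma phi)
  (Huniq : forall h, in_K lam h -> solves_P lam beta gamma h ->
             forall x, 0 <= x <= lam -> h x = phi x) :
  forall eta, 0 < eta < lam ->
    0 <= phi eta <= 1 /\ Derive phi eta > 0 /\ Derive_n phi 2 eta < 0.
Proof.
  intros eta Heta.
  destruct HK as [Han Hb]. destruct Hsol as [Hode [Hbc Hend]].
  assert (Sm : forall x, 0 <= x <= lam -> ex_derive phi x /\ ex_derive (Derive phi) x)
    by (intros x Hx; apply smooth, Han, Hx).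
  set (D := Derive phi) in *.
  set (u := fun t => (1 + beta * phi t) * D t) in *.
  assert (Du : forall t, 0 <= t <= lam -> ex_derive u t).
  { intros t Ht. destruct (Sm t Ht) as [S1 S2]. unfold u.
    apply ex_derive_mult; auto. auto_derive; auto. }
  assert (Cphi : forall t, 0 <= t <= lam -> continuity_pt phi t).
  { intros t Ht. apply continuity_pt_filterlim; apply (@ex_derive_continuous R_AbsRing R_NormedModule); apply (Sm t Ht). }
  assert (Cu : forall t, 0 <= t <= lam -> continuity_pt u t).
  { intros t Ht. apply continuity_pt_filterlim; apply (@ex_derive_continuous R_AbsRing R_NormedModule); apply Du, Ht. }
  assert (pos : forall t, 0 <= t <= lam -> 1 <= 1 + beta * phi t).
  { intros t Ht. destruct (Hb t Ht). nra. }
  assert (Hu' : forall t, 0 < t < lam -> is_derive u t (-2 * t * D t)).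
  { intros t Ht. replace (-2 * t * D t) with (Derive u t).
    apply Derive_correct, Du; lra. specialize (Hode t Ht). fold D in Hode. fold u in Hode. lra. }
  set (v := fun t => u t * u t).
  set (dv := fun t => -4 * t * (1 + beta * phi t) * D t ^ 2).
  assert (Hv' : forall t, 0 < t < lam -> is_derive v t (dv t)).
  { intros t Ht. pose proof (is_derive_mult u u t _ _ (Hu' t Ht) (Hu' t Ht)) as K.
    specialize (K ltac:(intros; apply Rmult_comm)).
    replace (dv t) with (plus (mult (-2 * t * D t) (u t)) (mult (u t) (-2 * t * D t))).
    exact K. unfold plus, mult; simpl. unfold dv, u. ring. }
  assert (Cv : forall t, 0 <= t <= lam -> continuity_pt v t).
  { intros t Ht. unfold v. apply continuity_pt_mult; apply Cu; auto. }
  assert (vdecr : forall t, 0 <= t <= lam -> v t <= v 0).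
  { intros t Ht. destruct (Req_dec t 0) as [->|Hn]; [lra|].
    destruct (MVT_gen v 0 t dv) as [c [Hc E]].
    - rewrite Rmin_left, Rmax_right by lra. intros; apply Hv'; lra.
    - rewrite Rmin_left, Rmax_right by lra. intros; apply Cv; lra.
    - rewrite Rmin_left, Rmax_right in Hc by lra.
      assert (dv c <= 0).
      { unfold dv. pose proof (pos c ltac:(lra)). assert (0 <= D c ^ 2) by (apply pow2_ge_0).
        assert (0 <= c * (1 + beta * phi c)) by nra. nra. }
      nra. }
  set (w := fun t => v t * exp (4 * lam * t)).
  set (dw := fun t => dv t * exp (4 * lam * t) + v t * (4 * lam * exp (4 * lam * t))).
  assert (wincr : forall t, 0 <= t <= lam -> v 0 <= w t).
  { intros t Ht.
    assert (w0 : w 0 = v 0) by (unfold w; rewrite Rmult_0_r, exp_0; ring).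
    destruct (Req_dec t 0) as [->|Hn]; [lra|].
    destruct (MVT_gen w 0 t dw) as [c [Hc E]].
    - rewrite Rmin_left, Rmax_right by lra. intros x Hx.
      unfold w, dw. apply (is_derive_mult v (fun t => exp (4 * lam * t))).
      apply Hv'; lra. auto_derive; auto; ring. intros; apply Rmult_comm.
    - rewrite Rmin_left, Rmax_right by lra. intros x Hx. unfold w.
      apply continuity_pt_mult. apply Cv; lra.
      apply continuity_pt_filterlim. apply (@ex_derive_continuous R_AbsRing R_NormedModule (fun t => exp (4 * lam * t))). auto_derive; auto.
    - rewrite Rmin_left, Rmax_right in Hc by lra.
      assert (0 <= dw c).
      { unfold dw, dv, v, u. pose proof (pos c ltac:(lra)). assert (0 <= D c ^ 2) by (apply pow2_ge_0).
        pose proof (exp_pos (4 * lam * c)). set (p := 1 + beta * phi c) in *.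
        set (q := D c ^ 2) in *. set (e := exp (4 * lam * c)) in *.
        replace (-4 * c * p * q * e + p * D c * (p * D c) * (4 * lam * e))
          with (4 * (p * q * e) * (lam * p - c)) by (unfold q; ring).
        apply Rmult_le_pos. assert (0 <= p * q) by nra. nra. nra. }
      nra. }
  assert (u0 : u 0 = gamma * phi 0).
  { unfold u. rewrite Rmult_plus_distr_r. lra. }
  destruct (Hb 0 ltac:(lra)) as [phi0 _].
  destruct (Req_dec (phi 0) 0) as [Z|NZ].
  - exfalso.
    assert (uz : forall t, 0 <= t <= lam -> u t = 0).
    { intros t Ht. pose proof (vdecr t Ht). unfold v in *. rewrite u0, Z in H. nra. }
    assert (Dz : forall t, 0 <= t <= lam -> D t = 0).
    { intros t Ht. pose proof (uz t Ht). pose proof (pos t Ht). unfold u in H.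
      destruct (Rmult_integral _ _ H); lra. }
    destruct (MVT_gen phi 0 lam D) as [c [Hc E]].
    + rewrite Rmin_left, Rmax_right by lra. intros x Hx. apply Derive_correct, (Sm x). lra.
    + rewrite Rmin_left, Rmax_right by lra. intros x Hx. apply Cphi; lra.
    + rewrite Rmin_left, Rmax_right in Hc by lra. rewrite Dz in E by lra. lra.
  - assert (Pu0 : 0 < u 0) by (rewrite u0; nra).
    assert (unz : forall t, 0 <= t <= lam -> u t <> 0).
    { intros t Ht Hz. pose proof (wincr t Ht). unfold w, v in H. rewrite Hz in H.
      unfold v in H. nra. }
    assert (ue : 0 < u eta).
    { destruct (Rlt_or_le 0 (u eta)) as [|Hle]; auto. exfalso.
      destruct (Rle_lt_or_eq_dec _ _ Hle) as [Hlt|Heq].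
      2:{ apply (unz eta); lra. }
      destruct (Ranalysis5.IVT_interv (fun t => - u t) 0 eta) as [z [Hz1 Hz2]].
      + intros a Ha. apply continuity_pt_opp. apply Cu; lra.
      + lra.
      + lra.
      + lra.
      + apply (unz z); lra. }
    pose proof (pos eta ltac:(lra)) as Peta.
    assert (De : 0 < D eta).
    { unfold u in ue. destruct (Rlt_or_le 0 (D eta)); auto. nra. }
    split; [apply Hb; lra|]. split; [exact De|].
    change (Derive_n phi 2 eta) with (Derive D eta).
    destruct (Sm eta ltac:(lra)) as [S1 S2].
    assert (Hm : is_derive u eta (beta * D eta * D eta + (1 + beta * phi eta) * Derive D eta)).
    { unfold u. pose proof (is_derive_mult (fun t => 1 + beta * phi t) D eta (beta * D eta) (Derive D eta)) as K.
      replace (beta * D eta * D eta + (1 + beta * phi eta) * Derive D eta) with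
        (plus (mult (beta * D eta) (D eta)) (mult (1 + beta * phi eta) (Derive D eta))).
      apply K. auto_derive; auto. change (Derive (fun x => phi x) eta) with (D eta); ring. apply Derive_correct; auto.
      intros; apply Rmult_comm. unfold plus, mult; simpl; ring. }
    pose proof (is_derive_unique _ _ _ Hm) as E1.
    pose proof (is_derive_unique _ _ _ (Hu' eta Heta)) as E2.
    rewrite E1 in E2.
    assert (0 < 2 * eta * D eta) by nra.
    assert (0 <= beta * D eta * D eta) by (apply Rmult_le_pos; nra).
    destruct (Rlt_or_le (Derive D eta) 0); auto. nra.
Qed.
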